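(* Let $D\ge1$ and let $\mathcal{F}$ be a collection of pairwise non-overlapping $D$-simplices on $\gamma_D$ whose vertex sets have union exactly a set of $n$ points, and suppose $\mathcal{F}$ is non-extendable. Then there is a collection $\mathcal{F}'$ of pairwise non-overlapping $(D+1)$-simplices on $\gamma_{D+1}$ whose vertex sets have union a set of exactly $n+1$ points of $\gamma_{D+1}$, such that $\mathcal{F}'$ is non-extendable.
   Context: $\gamma_D=\{(t,t^2,\dots,t^D):t\in\mathbb{R}\}$. A $D$-simplex on $\gamma_D$ is $\mathrm{conv}(\sigma)$ for $\sigma\subseteq\gamma_D$, $|\sigma|=D+1$. Simplices overlap if $\mathrm{conv}(\sigma)\cap\mathrm{conv}(\tau)\supsetneq\mathrm{conv}(\sigma\cap\tau)$. A collection of simplices on $\gamma_D$ whose vertex sets have union $A$ is non-extendable if there is no triangulation of $\mathrm{conv}(A)$ all of whose vertices lie in $A$ and which contains every simplex of the collection. *)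

(* Defs.v *)
From HB Require Import structures.
From mathcomp Require Import all_boot all_order all_algebra.
From mathcomp Require Import finmap.
From mathcomp Require Import reals.
Unset Printing Implicit Defensive.
Import Order.TTheory GRing.Theory Num.Theory.
Local Open Scope ring_scope.
Local Open Scope fset_scope.

(* The point (t, t^2, ..., t^D) of the moment curve gamma_D, in R^D. *)
Definition mpt {R : realType} (D : nat) (t : R) : 'rV[R]_D :=
  \row_(i < D) t ^+ i.+1.

(* A finite set of points on gamma_D is given by its finite set of parameters
   S : {fset R}; x lies in conv of the corresponding points. *)
Definition in_conv {R : realType} (D : nat) (S : {fset R}) (x : 'rV[R]_D) : Prop :=
  exists lam : R -> R,
    (forall t, t \in S -> 0 <= lam t) /\
    \sum_(t <- enum_fset S) lam t = 1 /\
    x = \sum_(t <- enum_fset S) lam t *: mpt D t.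

Definition is_simplex {R : realType} (D : nat) (s : {fset R}) : Prop :=
  #|` s| = D.+1.

Definition overlap {R : realType} (D : nat) (s t : {fset R}) : Prop :=
  (forall x, in_conv D (s `&` t) x -> in_conv D s x /\ in_conv D t x) /\
  (exists x, in_conv D s x /\ in_conv D t x /\ ~ in_conv D (s `&` t) x).

Definition pairwise_nonoverlapping {R : realType} (D : nat) (F : {fset {fset R}}) : Prop :=
  forall s t, s \in F -> t \in F -> ~ overlap D s t.

Definition vertex_union {R : realType} (F : {fset {fset R}}) (A : {fset R}) : Prop :=
  forall t, t \in A <-> exists2 s, s \in F & t \in s.

Definition triangulation {R : realType} (D : nat) (A : {fset R}) (T : {fset {fset R}}) : Prop :=
  (forall s, s \in T -> is_simplex D s /\ s `<=` A) /\
  pairwise_nonoverlapping D T /\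
  (forall x, in_conv D A x <-> exists2 s, s \in T & in_conv D s x).

Definition non_extendable {R : realType} (D : nat) (F : {fset {fset R}}) (A : {fset R}) : Prop :=
  ~ exists T : {fset {fset R}}, triangulation D A T /\ F `<=` T.

(* Main.v *)
Require Import Defs.
From HB Require Import structures.
From mathcomp Require Import all_boot all_order all_algebra.
From mathcomp Require Import finmap.
From mathcomp Require Import reals.
From mathcomp Require Import ring lra zify.
Import Order.TTheory GRing.Theory Num.Theory.
Local Open Scope fset_scope.
Local Open Scope ring_scope.

Definition mom {R : realType} (S : {fset R}) (lam : R -> R) (k : nat) : R :=
  \sum_(u <- enum_fset S) lam u * u ^+ k.

Definition conv_mom {R : realType} (D : nat) (S : {fset R}) (x : 'rV[R]_D) (lam : R -> R) : Prop :=
  (forall u, u \in S -> 0 <= lam u) /\ mom S lam 0 = 1 /\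
  forall j : 'I_D, x 0 j = mom S lam j.+1.

Lemma in_convP {R : realType} (D : nat) (S : {fset R}) (x : 'rV[R]_D) :
  in_conv D S x <-> exists lam, conv_mom D S x lam.
Proof.
split.
- move=> [lam [h0 [h1 hx]]]; exists lam; split => //; split.
    by rewrite /mom; under eq_bigr do rewrite expr0 mulr1.
  move=> j; rewrite hx summxE /mom; apply: eq_bigr => u _.
  by rewrite !mxE.
- move=> [lam [h0 [h1 hx]]]; exists lam; split => //; split.
    by move: h1; rewrite /mom; under eq_bigr do rewrite expr0 mulr1.
  apply/rowP => j; rewrite hx summxE /mom; apply: eq_bigr => u _.
  by rewrite !mxE.
Qed.

Lemma mom_incl {R : realType} (S S' : {fset R}) (lam : R -> R) k :
  S `<=` S' -> (forall u, u \in S' -> u \notin S -> lam u = 0) ->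
  mom S lam k = mom S' lam k.
Proof.
move=> sub h; rewrite /mom; apply: big_fset_incl => // u uS' uS.
by rewrite h // mul0r.
Qed.

Lemma conv_mono {R : realType} (D : nat) (S S' : {fset R}) (x : 'rV[R]_D) :
  S `<=` S' -> in_conv D S x -> in_conv D S' x.
Proof.
move=> sub /in_convP [lam [h0 [h1 hx]]]; apply/in_convP.
exists (fun u => if u \in S then lam u else 0).
have E k : mom S' (fun u => if u \in S then lam u else 0) k = mom S lam k.
  rewrite -(@mom_incl _ S S'); last by move=> u _ /negbTE ->.
    by rewrite /mom; apply: eq_big_seq => u uS; rewrite uS.
  done.
split; first by move=> u _; case: ifP => // /h0.
by split; [rewrite E | move=> j; rewrite E].
Qed.

Lemma overlap1 {R : realType} (D : nat) (s t : {fset R}) x :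
  in_conv D (s `&` t) x -> in_conv D s x /\ in_conv D t x.
Proof.
by move=> h; split; apply: conv_mono h; [apply: fsubsetIl | apply: fsubsetIr].
Qed.

Lemma same_point {R : realType} (D : nat) (S S' : {fset R}) (x : 'rV[R]_D) a b :
  conv_mom D S x a -> conv_mom D S' x b ->
  forall i, (i <= D)%N -> mom S a i = mom S' b i.
Proof.
move=> [_ [a0 ax]] [_ [b0 bx]] [|i] hi; first by rewrite a0 b0.
by rewrite -(ax (Ordinal hi)) -(bx (Ordinal hi)).
Qed.


Definition Ymom {R : realType} (a : R) (m : nat -> R) (k : nat) : R :=
  a ^+ k - 2^-1 * \sum_(i < k) a ^+ i * m (k.-1 - i)%N.

Definition lifty {R : realType} (D : nat) (a : R) (m : nat -> R) : 'rV[R]_D.+1 :=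
  \row_(j < D.+1) Ymom a m j.+1.

Definition lamw {R : realType} (a : R) (al : R -> R) (u : R) : R := al u / (2 * (a - u)).

Definition wl {R : realType} (a : R) (s : {fset R}) (al : R -> R) (u : R) : R :=
  if u == a then 1 - mom s (lamw a al) 0 else lamw a al u.

Lemma Ymom_rec {R : realType} (a : R) m i :
  a * Ymom a m i - Ymom a m i.+1 = 2^-1 * m i.
Proof.
rewrite /Ymom big_ord_recl /= expr0 mul1r subn0.
have -> : \sum_(i0 < i) a ^+ (bump 0 i0) * m (i - bump 0 i0)%N =
          a * \sum_(i0 < i) a ^+ i0 * m (i.-1 - i0)%N.
  rewrite mulr_sumr; apply: eq_bigr => j _.
  have -> : (i - bump 0 j = i.-1 - j)%N by rewrite /bump /=; lia.
  by rewrite /bump /= exprS mulrA.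
rewrite exprS; ring.
Qed.

Lemma Ymom0 {R : realType} (a : R) m : Ymom a m 0 = 1.
Proof. by rewrite /Ymom big_ord0 mulr0 subr0 expr0. Qed.

Lemma Ymom_eq {R : realType} (a : R) m m' k :
  (forall i, (i < k)%N -> m i = m' i) -> Ymom a m k = Ymom a m' k.
Proof.
move=> h; rewrite /Ymom; congr (_ - _ * _); apply: eq_bigr => i _.
by rewrite h //; case: i => i /= ?; lia.
Qed.

Lemma lift_conv {R : realType} (D : nat) (a : R) (sg : {fset R}) (x : 'rV[R]_D) al :
  a \in sg -> (forall u, u \in sg -> u != a -> u + 1 <= a) ->
  conv_mom D (sg `\ a) x al ->
  conv_mom D.+1 sg (lifty D a (mom (sg `\ a) al)) (wl a (sg `\ a) al).
Proof.
move=> asg good [al0 [al1 alx]].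
set s := sg `\ a.
have sgood u : u \in s -> 0 < a - u /\ 1 <= a - u.
  rewrite in_fsetD1 => /andP [ua us]; have := good u us ua; lra.
have key k : mom sg (wl a s al) k = Ymom a (mom s al) k.
  rewrite /mom (big_fsetD1 _ asg) /= /wl eqxx.
  have -> : \sum_(i <- sg `\ a) (if i == a then 1 - mom s (lamw a al) 0 else lamw a al i) * i ^+ k
      = \sum_(i <- s) lamw a al i * i ^+ k.
    apply: eq_big_seq => u; rewrite in_fsetD1 => /andP [/negbTE -> _] //.
  have step : forall u, u \in s -> lamw a al u * u ^+ k =
      lamw a al u * a ^+ k - 2^-1 * \sum_(i < k) a ^+ i * (al u * u ^+ (k.-1 - i)).
    move=> u us; have [h1 _] := sgood u us.
    have E : lamw a al u * u ^+ k - lamw a al u * a ^+ k =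
             lamw a al u * (u ^+ k - a ^+ k) by ring.
    have E2 : \sum_(i < k) a ^+ i * (al u * u ^+ (k.-1 - i)) =
              al u * \sum_(i < k) u ^+ (k.-1 - i) * a ^+ i.
      rewrite mulr_sumr; apply: eq_bigr => i _; ring.
    rewrite E2; apply/eqP; rewrite -subr_eq0; apply/eqP.
    have -> : lamw a al u * u ^+ k - (lamw a al u * a ^+ k - 2^-1 * (al u * \sum_(i < k) u ^+ (k.-1 - i) * a ^+ i))
      = lamw a al u * (u ^+ k - a ^+ k) + 2^-1 * (al u * \sum_(i < k) u ^+ (k.-1 - i) * a ^+ i) by ring.
    rewrite subrXX /lamw.
    set S := \sum_(i < k) _.
    field; lra.
  rewrite (eq_big_seq _ step) sumrB -mulr_sumr -mulr_suml.
  rewrite /Ymom exchange_big /=.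
  have -> : \sum_(j < k) \sum_(i <- s) a ^+ j * (al i * i ^+ (k.-1 - j)) =
            \sum_(j < k) a ^+ j * mom s al (k.-1 - j).
    by apply: eq_bigr => j _; rewrite /mom mulr_sumr.
  have -> : mom s (lamw a al) 0 = \sum_(i <- s) lamw a al i by rewrite /mom; apply: eq_bigr => i _; rewrite expr0 mulr1.
  rewrite /mom.
  ring.
split; last split.
- move=> u usg; rewrite /wl; case: eqP => [_|/eqP ua].
  + rewrite subr_ge0.
    have le : mom s (lamw a al) 0 <= mom s al 0 / 2.
      rewrite /mom mulr_suml big_seq [X in _ <= X]big_seq; apply: ler_sum => v vs.
      have [h1 h2] := sgood v vs; have h0 := al0 v vs.
      rewrite /lamw !expr0 !mulr1 ler_pdivrMr; last lra.
      have -> : al v / 2 * (2 * (a - v)) = al v * (a - v) by field.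
      nra.
    by move: le; rewrite al1; lra.
  + have us : u \in s by rewrite in_fsetD1 ua.
    have [h1 _] := sgood u us; rewrite /lamw divr_ge0 //; [exact: al0 | lra].
- by rewrite key Ymom0.
- by move=> j; rewrite key mxE.
Qed.

Lemma recover {R : realType} (D : nat) (a : R) (S : {fset R}) (y : 'rV[R]_D.+1) mu m
   (x : 'rV[R]_D) :
  (forall u, u \in S -> u <= a) -> conv_mom D.+1 S y mu ->
  (forall j : 'I_D.+1, y 0 j = Ymom a m j.+1) -> m 0%N = 1 ->
  (forall j : 'I_D, x 0 j = m j.+1) ->
  conv_mom D (S `\ a) x (fun u => 2 * mu u * (a - u)).
Proof.
move=> le [mu0 [mu1 muy]] hy m0 hx.
have momY k : (k <= D.+1)%N -> mom S mu k = Ymom a m k.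
  case: k => [|k] hk; first by rewrite mu1 Ymom0.
  by rewrite -(hy (Ordinal hk)) muy.
have key i : (i <= D)%N -> mom (S `\ a) (fun u => 2 * mu u * (a - u)) i = m i.
  move=> hi; rewrite (@mom_incl _ _ S); last first.
    move=> u uS; rewrite in_fsetD1 uS andbT negbK => /eqP ->; ring.
    exact: fsubsetDl.
  have -> : mom S (fun u => 2 * mu u * (a - u)) i = 2 * (a * mom S mu i - mom S mu i.+1).
    rewrite /mom mulr_sumr -sumrB mulr_sumr; apply: eq_bigr => u _; rewrite exprS; ring.
  rewrite !momY //; last lia. have := Ymom_rec a m i; lra.
split; last split.
- move=> u; rewrite in_fsetD1 => /andP [_ uS].
  have := mu0 u uS; have := le u uS; nra.
- by rewrite key.
- by move=> j; rewrite key // hx.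
Qed.


Lemma vdm {R : realType} (D : nat) (S : {fset R}) (k : R -> R) :
  (#|` S| <= D.+1)%N ->
  (forall i, (i <= D)%N -> \sum_(u <- enum_fset S) k u * u ^+ i = 0) ->
  forall u0, u0 \in S -> k u0 = 0.
Proof.
move=> hS h u0 u0S.
set P := \prod_(v <- enum_fset (S `\ u0)) ('X - v%:P).
have sP : (size P <= D.+1)%N.
  rewrite size_prod_XsubC; move: hS; rewrite (cardfsD1 u0) u0S.
  rewrite /= add1n ltnS => h1; exact: h1.
have E : \sum_(u <- enum_fset S) k u * P.[u] = 0.
  under eq_bigr do rewrite (horner_coef_wide _ sP) mulr_sumr.
  rewrite exchange_big /=; apply: big1 => i _.
  have -> : \sum_(u <- enum_fset S) k u * (P`_i * u ^+ i) =
            P`_i * \sum_(u <- enum_fset S) k u * u ^+ i.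
    by rewrite mulr_sumr; apply: eq_bigr => u _; ring.
  by rewrite h ?mulr0 //; case: i => i /=; rewrite ltnS.
have E2 : \sum_(u <- enum_fset S) k u * P.[u] = k u0 * P.[u0].
  rewrite (big_fsetD1 _ u0S) /= big1_fset ?addr0 // => u uS _.
  have : root P u by rewrite root_prod_XsubC.
  by move/rootP => ->; rewrite mulr0.
have nz : P.[u0] != 0.
  have : ~~ root P u0 by rewrite root_prod_XsubC in_fsetD1 eqxx.
  by [].
move: E; rewrite E2 => /eqP; rewrite mulf_eq0 (negbTE nz) orbF => /eqP //.
Qed.


Arguments same_point {R D S S' x a b}.

Definition goodset {R : realType} (a : R) (sg : {fset R}) : Prop :=
  forall u, u \in sg -> u != a -> u + 1 <= a.

Lemma good_le {R : realType} (a : R) sg : goodset a sg -> forall u, u \in sg -> u <= a.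
Proof.
move=> g u us; case: (eqVneq u a) => [->|ua]; first by [].
have := g u us ua; lra.
Qed.

Arguments good_le {R a sg}.

Lemma mom_nu {R : realType} (a : R) S f i :
  mom S (fun u => f u * (a - u)) i = a * mom S f i - mom S f i.+1.
Proof.
rewrite /mom mulr_sumr -sumrB; apply: eq_bigr => u _; rewrite exprS; ring.
Qed.

Lemma mom_div {R : realType} (c : R) S f i :
  mom S (fun u => f u / c) i = mom S f i / c.
Proof. rewrite /mom mulr_suml; apply: eq_bigr => u _; ring. Qed.

Lemma mom_restrict {R : realType} (I S : {fset R}) f i :
  I `<=` S -> mom S (fun u => if u \in I then f u else 0) i = mom I f i.
Proof.
move=> sub; rewrite -(@mom_incl _ I S) //; last by move=> u _ /negbTE ->.
by rewrite /mom; apply: eq_big_seq => u uI; rewrite uI.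
Qed.

Lemma lemA {R : realType} (D : nat) (a : R) (sg tg : {fset R}) :
  a \in sg -> a \in tg -> goodset a sg -> goodset a tg ->
  overlap D (sg `\ a) (tg `\ a) -> overlap D.+1 sg tg.
Proof.
move=> asg atg gs gt [_ [x [/in_convP [al hal] [/in_convP [be hbe] hn]]]].
split; first by move=> z; apply: overlap1.
set m := mom (sg `\ a) al.
have same := same_point hal hbe.
exists (lifty D a m); split; last split.
- apply/in_convP; exists (wl a (sg `\ a) al); exact: (lift_conv D a sg x al asg gs hal).
- apply/in_convP; exists (wl a (tg `\ a) be).
  have -> : lifty D a m = lifty D a (mom (tg `\ a) be).
    apply/rowP => j; rewrite !mxE; apply: Ymom_eq => i hi; apply: same.
    by case: j hi => j /= hj hi; lia.
  exact: (lift_conv D a tg x be atg gt hbe).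
- move=> /in_convP [mu hmu]; apply: hn; apply/in_convP.
  eexists; rewrite -fsetDIl.
  apply: (@recover _ D a (sg `&` tg) (lifty D a m) mu m x).
  + move=> u; rewrite in_fsetI => /andP [us _]; exact: good_le gs u us.
  + exact: hmu.
  + by move=> j; rewrite mxE.
  + by case: hal => _ [].
  + by case: hal => _ [].
Qed.

Lemma lemB {R : realType} (D : nat) (a : R) (sg tg : {fset R}) :
  a \in sg -> a \in tg -> goodset a sg -> goodset a tg ->
  (#|` sg `\ a| <= D.+1)%N ->
  overlap D.+1 sg tg -> overlap D (sg `\ a) (tg `\ a).
Proof.
move=> asg atg gs gt card [_ [y [/in_convP [mu hmu] [/in_convP [mu' hmu'] hn]]]].
have same := same_point hmu hmu'.
have key : (forall u, u \in sg -> u \notin tg -> mu u = 0) -> False.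
  move=> h; apply: hn; apply/in_convP; exists mu.
  case: hmu => [mu0 [mu1 muy]].
  have E k : mom (sg `&` tg) mu k = mom sg mu k.
    apply: mom_incl; first exact: fsubsetIl.
    by move=> u us; rewrite in_fsetI us /= => /h; apply.
  split; last split.
  + by move=> u; rewrite in_fsetI => /andP [us _]; apply: mu0.
  + by rewrite E.
  + by move=> j; rewrite E.
set nu := fun u => mu u * (a - u).
set nu' := fun u => mu' u * (a - u).
have eqnu i : (i <= D)%N -> mom sg nu i = mom tg nu' i.
  by move=> hi; rewrite /nu /nu' !mom_nu !same //; lia.
have nu0 u : u \in sg -> 0 <= nu u.
  move=> us; rewrite /nu; case: hmu => [mu0 _]; have := mu0 u us;
  have := good_le gs u us; nra.
have nu'0 u : u \in tg -> 0 <= nu' u.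
  move=> us; rewrite /nu'; case: hmu' => [mu0 _]; have := mu0 u us;
  have := good_le gt u us; nra.
have nuz u : u \in sg -> u != a -> nu u = 0 -> mu u = 0.
  move=> us ua; rewrite /nu => /eqP; rewrite mulf_eq0 => /orP [/eqP //|].
  have := gs u us ua; move=> h1 /eqP h2; exfalso; lra.
set c := mom sg nu 0.
have c0 : 0 <= c.
  rewrite /c /mom big_seq sumr_ge0 // => u us; rewrite expr0 mulr1; exact: nu0.
have momD S f i : a \in S -> f a = 0 -> mom (S `\ a) f i = mom S f i.
  move=> aS fa; apply: mom_incl; first exact: fsubsetDl.
  by move=> u uS; rewrite in_fsetD1 uS andbT negbK => /eqP ->.
have nua : nu a = 0 by rewrite /nu subrr mulr0.
have nu'a : nu' a = 0 by rewrite /nu' subrr mulr0.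
case: (eqVneq c 0) => [cz | cnz].
- exfalso; apply: key => u us ut.
  have ua : u != a by apply: contraNneq ut => ->.
  apply: nuz => //.
  have le1 : nu u <= c.
    rewrite /c /mom (big_fsetD1 _ us) /= expr0 mulr1 lerDl big_seq sumr_ge0 // => v.
    by rewrite in_fsetD1 => /andP [_ vs]; rewrite expr0 mulr1; apply: nu0.
  have := nu0 u us; rewrite cz in le1; lra.
- have cpos : 0 < c by rewrite lt_def cnz c0.
  set x : 'rV[R]_D := \row_(j < D) (mom sg nu j.+1 / c).
  have hal : conv_mom D (sg `\ a) x (fun u => nu u / c).
    split; last split.
    + move=> u; rewrite in_fsetD1 => /andP [_ us]; apply: divr_ge0; last exact: ltW.
      exact: nu0.
    + by rewrite mom_div momD // divff.
    + by move=> j; rewrite mom_div momD // mxE.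
  have hbe : conv_mom D (tg `\ a) x (fun u => nu' u / c).
    split; last split.
    + move=> u; rewrite in_fsetD1 => /andP [_ us]; apply: divr_ge0; last exact: ltW.
      exact: nu'0.
    + by rewrite mom_div momD // -eqnu // divff.
    + move=> j; rewrite mom_div momD // -eqnu ?mxE //.
  split; first by move=> z; apply: overlap1.
  exists x; split; first by apply/in_convP; eexists; exact: hal.
  split; first by apply/in_convP; eexists; exact: hbe.
  move=> /in_convP [de hde].
  have same2 := same_point hal hde.
  set I := (sg `\ a) `&` (tg `\ a).
  have sub : I `<=` sg `\ a by apply: fsubsetIl.
  have V := @vdm R D (sg `\ a) (fun u => nu u / c - (if u \in I then de u else 0)) card.
  apply: key => u us ut.
  have ua : u != a by apply: contraNneq ut => ->.
  have usa : u \in sg `\ a by rewrite in_fsetD1 ua us.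
  have uI : u \notin I.
    rewrite /I in_fsetI !in_fsetD1 ua us (negbTE ut) /=. by [].

  have hV : forall i, (i <= D)%N -> \sum_(u0 <- enum_fset (sg `\ a))
        (nu u0 / c - (if u0 \in I then de u0 else 0)) * u0 ^+ i = 0.
    move=> i hi.
    have -> : \sum_(u0 <- enum_fset (sg `\ a))
        (nu u0 / c - (if u0 \in I then de u0 else 0)) * u0 ^+ i =
        mom (sg `\ a) (fun u => nu u / c) i - mom (sg `\ a) (fun u => if u \in I then de u else 0) i.
      by rewrite /mom -sumrB; apply: eq_bigr => v _ /=; ring.
    by rewrite mom_restrict // same2 // subrr.
  apply: nuz => //.
  have := V hV u usa; rewrite (negbTE uI) subr0 => h.
  have : nu u = (nu u / c) * c by field.
  by rewrite h mul0r.
Qed.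


Arguments lemB {R D a sg tg}.
Arguments lemA {R D a sg tg}.

Lemma main_aux (R : realType) (D n : nat) (F : {fset {fset R}}) (A : {fset R}) :
  (1 <= D)%N ->
  (forall s, s \in F -> is_simplex D s) ->
  pairwise_nonoverlapping D F ->
  vertex_union F A ->
  #|` A| = n ->
  non_extendable D F A ->
  exists (F' : {fset {fset R}}) (A' : {fset R}),
    (forall s, s \in F' -> is_simplex D.+1 s) /\
    pairwise_nonoverlapping D.+1 F' /\
    vertex_union F' A' /\
    #|` A'| = n.+1 /\
    non_extendable D.+1 F' A'.
Proof.
move=> D1 Fs Fno Fvu An Fne.
have [s0 s0F] : exists s0, s0 \in F.
  case: (eqVneq F fset0) => [F0 | /fset0Pn //].
  exfalso; apply: Fne; exists fset0; split; last by rewrite F0 fsub0set.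
  have A0 : A = fset0.
    apply/fsetP => t; rewrite in_fset0; apply/negbTE/negP => /Fvu [s].
    by rewrite F0 in_fset0.
  split; first by move=> s; rewrite in_fset0.
  split; first by move=> s t; rewrite in_fset0.
  move=> x; split; last by case=> s; rewrite in_fset0.
  move=> /in_convP [lam [_ [h1 _]]]; move: h1.
  rewrite A0 /mom big_seq_fset0 => /eqP; rewrite eq_sym oner_eq0 //.
set a : R := 1 + \sum_(u <- enum_fset A) `|u|.
have aA : forall u, u \in A -> u + 1 <= a.
  move=> u uA; rewrite /a (big_fsetD1 _ uA) /=.
  have h1 : 0 <= \sum_(i <- A `\ u) `|i| by rewrite big_seq sumr_ge0 // => i _.
  have h2 := ler_norm u; lra.
have anA : a \notin A by apply/negP => /aA; lra.
have sA : forall s, s \in F -> s `<=` A.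
  by move=> s sF; apply/fsubsetP => u us; apply/Fvu; exists s.
have anS : forall s, s \in F -> a \notin s.
  by move=> s sF; apply: contra anA; apply/fsubsetP/sA.
have goodS : forall s, s \in F -> goodset a (a |` s).
  move=> s sF u; rewrite in_fset1U => /orP [/eqP -> | us]; first by rewrite eqxx.
  by move=> _; apply: aA; move/fsubsetP: (sA s sF); apply.
set A' := a |` A.
have goodA' : goodset a A'.
  move=> u; rewrite in_fset1U => /orP [/eqP -> | us]; first by rewrite eqxx.
  by move=> _; apply: aA.
have goodsub : forall sg, sg `<=` A' -> goodset a sg.
  by move=> sg /fsubsetP sub u us; apply: goodA'; apply: sub.
exists [fset a |` s | s in F], A'.
split; last split; last split; last split.
- move=> s' /imfsetP [s sF ->]; rewrite /is_simplex cardfsU1 anS //= Fs // add1n.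
- move=> s1' s2' /imfsetP [s1 s1F ->] /imfsetP [s2 s2F ->] ov.
  apply: (Fno s1 s2 s1F s2F).
  have := @lemB R D a (a |` s1) (a |` s2) (fset1U1 a s1) (fset1U1 a s2) (goodS _ s1F) (goodS _ s2F).
  by rewrite !fsetU1K ?anS // (Fs _ s1F); apply.
- move=> t; rewrite /A' in_fset1U; split.
  + case/orP => [/eqP -> | tA].
      by exists (a |` s0); [apply: in_imfset | apply: fset1U1].
    move/Fvu: tA => [s sF ts]; exists (a |` s); first by apply: in_imfset.
    by rewrite in_fset1U ts orbT.
  + move=> [s' /imfsetP [s sF ->]]; rewrite in_fset1U => /orP [-> // | ts].
    by apply/orP; right; apply/Fvu; exists s.
- by rewrite /A' cardfsU1 anA An.
- move=> [T' [[Tsimp [Tno Tcov]] FT']].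
  apply: Fne.
  exists [fset sg `\ a | sg in [fset sg in T' | a \in sg]]; split; last first.
    apply/fsubsetP => s sF; apply/imfsetP; exists (a |` s); last by rewrite fsetU1K ?anS.
    rewrite /= !inE /= eqxx andbT; move/fsubsetP: FT'; apply; exact: in_imfset.
  have memT : forall s, s \in [fset sg `\ a | sg in [fset sg in T' | a \in sg]] ->
      exists2 sg, sg \in T' & (a \in sg) /\ s = sg `\ a.
    by move=> s /imfsetP [sg]; rewrite !inE /= => /andP [h1 h2] ->; exists sg.
  have Tsub : forall sg, sg \in T' -> sg `<=` A' by move=> sg /Tsimp [].
  have sT : forall s, s \in [fset sg `\ a | sg in [fset sg in T' | a \in sg]] ->
      is_simplex D s /\ s `<=` A.
    move=> s /memT [sg sgT [asg ->]]; have [hs hsub] := Tsimp sg sgT; split.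
      by move: hs; rewrite /is_simplex (cardfsD1 a) asg add1n => /eqP; rewrite eqSS => /eqP.
    apply/fsubsetP => u; rewrite in_fsetD1 => /andP [ua usg].
    move/fsubsetP: hsub => /(_ u usg); rewrite /A' in_fset1U (negbTE ua) //.
  split; first exact: sT.
  split.
    move=> s1 s2 /memT [sg1 sg1T [asg1 ->]] /memT [sg2 sg2T [asg2 ->]] ov.
    apply: (Tno sg1 sg2 sg1T sg2T).
    exact: (@lemA R D a sg1 sg2 asg1 asg2 (goodsub _ (Tsub _ sg1T)) (goodsub _ (Tsub _ sg2T)) ov).
  move=> x; split; last first.
    by move=> [s /sT [_ sub]]; apply: conv_mono.
  move=> /in_convP [al hal].
  have hal' : conv_mom D (A' `\ a) x al by rewrite /A' fsetU1K.
  have hy := lift_conv D a A' x al (fset1U1 a A) goodA' hal'.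
  set m := mom (A' `\ a) al in hy.
  have : in_conv D.+1 A' (lifty D a m) by apply/in_convP; eexists; exact: hy.
  move=> /Tcov [sg sgT /in_convP [mu hmu]].
  have gsg := goodsub sg (Tsub sg sgT).
  case: (boolP (a \in sg)) => asg.
    exists (sg `\ a); first by apply/imfsetP; exists sg; rewrite // !inE /= sgT asg.
    apply/in_convP; eexists.
    apply: (@recover _ D a sg (lifty D a m) mu m x).
    + exact: good_le gsg.
    + exact: hmu.
    + by move=> j; rewrite mxE.
    + by case: hal' => _ [].
    + by case: hal' => _ [].
  exfalso.
  have le1 : forall u, u \in sg -> u + 1 <= a.
    by move=> u us; apply: gsg => //; apply: contraNneq asg => <-.
  case: hmu => [mu0 [mu1 muy]].
  have := muy ord0; rewrite mxE /Ymom big_ord1 expr0 mul1r /=.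
  case: hal' => _ [m0 _]; rewrite -/m in m0; rewrite m0.
  have : mom sg mu 1 <= (a - 1) * mom sg mu 0.
    rewrite /mom mulr_sumr big_seq [X in _ <= X]big_seq; apply: ler_sum => u us.
    have := mu0 u us; have := le1 u us; rewrite expr1 expr0; nra.
  rewrite mu1; lra.
Qed.


Local Open Scope ring_scope.
Local Open Scope fset_scope.

Theorem proposition4p3 (R : realType) (D n : nat) (F : {fset {fset R}}) (A : {fset R}) :
  (1 <= D)%N ->
  (forall s, s \in F -> is_simplex D s) ->
  pairwise_nonoverlapping D F ->
  vertex_union F A ->
  #|` A| = n ->
  non_extendable D F A ->
  exists (F' : {fset {fset R}}) (A' : {fset R}),
    (forall s, s \in F' -> is_simplex D.+1 s) /\
    pairwise_nonoverlapping D.+1 F' /\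
    vertex_union F' A' /\
    #|` A'| = n.+1 /\
    non_extendable D.+1 F' A'.
Proof. exact: main_aux. Qed.
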